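(* There exist infinitely many graphs $G$ that are locally Ore and satisfy $\lambda(G) \ne \delta(G)$.
   Context: $\lambda(G)$ is the edge-connectivity and $\delta(G)$ the minimum degree of $G$. A graph $G$ is locally Ore if for every vertex $v \in V(G)$ and every pair $u,w$ of non-adjacent vertices in $N(v)$, $\deg_{\langle N(v)\rangle}(u) + \deg_{\langle N(v)\rangle}(w) \ge \deg_G(v)$, where $N(v)$ is the open neighbourhood of $v$ and $\langle N(v)\rangle$ the subgraph induced by it. *)

(* Defs.v *)
From mathcomp Require Import all_boot.
Set Implicit Arguments. Unset Strict Implicit. Unset Printing Implicit Defensive.

Definition simple_graph (T : finType) (e : rel T) : Prop :=
  symmetric e /\ irreflexive e.

Definition nbhd (T : finType) (e : rel T) (v : T) : {set T} := [set x | e v x].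

Definition deg (T : finType) (e : rel T) (v : T) : nat := #|nbhd e v|.

Definition deg_in_nbhd (T : finType) (e : rel T) (v u : T) : nat :=
  #|[set x in nbhd e v | e u x]|.

Definition min_deg (T : finType) (e : rel T) : nat :=
  \big[minn/#|T|]_(v : T) deg e v.

Definition connected_graph (T : finType) (e : rel T) : bool :=
  [forall x, forall y, connect e x y].

Definition edges (T : finType) (e : rel T) : {set {set T}} :=
  [set s : {set T} | [exists x, exists y, e x y && (s == [set x; y])]].

Definition del_edges (T : finType) (e : rel T) (F : {set {set T}}) : rel T :=
  fun x y => e x y && ([set x; y] \notin F).

Definition disconnecting (T : finType) (e : rel T) (F : {set {set T}}) : bool :=
  (F \subset edges e) && ~~ connected_graph (del_edges e F).

(* lambda(G), edge connectivity: minimum size of a disconnecting edge set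
   (0 if there is none, i.e. for the one-vertex / empty graph). *)
Definition edge_conn (T : finType) (e : rel T) : nat :=
  \big[minn/#|edges e|]_(F : {set {set T}} | disconnecting e F) #|F|.

Definition locally_ore (T : finType) (e : rel T) : Prop :=
  forall v u w : T, u \in nbhd e v -> w \in nbhd e v -> u != w -> ~~ e u w ->
    deg e v <= deg_in_nbhd e v u + deg_in_nbhd e v w.

(* Main.v *)
Require Import Defs.
From mathcomp Require Import zify.
From mathcomp Require Import all_boot.
Set Implicit Arguments. Unset Strict Implicit. Unset Printing Implicit Defensive.

Section G.
Variable N : nat.
Local Notation m := N.+4.+4.+4.
Definition V := (bool * 'I_m)%type.
Definition E : rel V := fun x y =>
  if x.1 == y.1 then x.2 != y.2 else (x.2 < 3) && (y.2 < 3).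

Lemma E_sym : symmetric E.
Proof.
move=> [s i] [t j]; rewrite /E /=; rewrite (eq_sym t) (eq_sym j).
by case: (s == t) => //; rewrite andbC.
Qed.

Lemma E_irr : irreflexive E.
Proof. by move=> [s i]; rewrite /E /= !eqxx. Qed.

Definition o0 : 'I_m := ord0.

Lemma conn0 (x : V) : connect E (false, o0) x.
Proof.
case: x => s i.
have h1 : connect E (false, o0) (s, o0).
  case: s; last exact: connect0.
  by apply: connect1; rewrite /E /=.
apply: connect_trans h1 _.
have [->|ne] := eqVneq i o0; first exact: connect0.
by apply: connect1; rewrite /E /= eqxx eq_sym.
Qed.

Lemma E_conn : connected_graph E.
Proof.
apply/forallP => x; apply/forallP => y.
apply: connect_trans (conn0 y).
by rewrite (sym_connect_sym E_sym) conn0.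
Qed.

Lemma deg_ge (v : V) : m.-1 <= deg E v.
Proof.
case: v => s i.
have -> : m.-1 = #|[set (s, j) | j in [set~ i]]|.
  by rewrite card_imset ?cardsC1 ?card_ord // => a b [].
apply: subset_leq_card; apply/subsetP => x /imsetP [j]; rewrite in_setC1 => ji ->.
by rewrite inE /E /= eqxx eq_sym.
Qed.

Lemma min_deg_ge : 10 <= min_deg E.
Proof.
rewrite /min_deg; apply: (big_ind (fun x => 10 <= x)).
- by rewrite card_prod card_bool card_ord.
- by move=> x y hx hy; rewrite leq_min hx hy.
- by move=> v _; apply: leq_trans (deg_ge v).
Qed.

Definition X (s : bool) : {set V} := [set (s, inord (val k)) | k : 'I_3].

Lemma inX s (i : 'I_m) : i < 3 -> (s, i) \in X s.
Proof.
move=> hi; apply/imsetP; exists (Ordinal hi) => //=.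
by congr pair; apply: val_inj; rewrite /= inordK // (leq_trans hi).
Qed.

Lemma X_inv s x : x \in X s -> x.1 = s /\ x.2 < 3.
Proof.
move=> /imsetP [k _ ->]; split => //=.
by rewrite inordK // (leq_trans (ltn_ord k)).
Qed.

Definition F : {set {set V}} :=
  (fun p : V * V => [set p.1; p.2]) @: setX (X false) (X true).

Lemma F_card : #|F| <= 9.
Proof.
apply: leq_trans (leq_imset_card _ _) _.
rewrite cardsX.
have h s : #|X s| <= 3 by apply: leq_trans (leq_imset_card _ _) _; rewrite card_ord.
exact: (leq_mul (h false) (h true)).
Qed.

Lemma F_disc : disconnecting E F.
Proof.
apply/andP; split.
  apply/subsetP => z /imsetP [[x y]]; rewrite inE /= => /andP [hx hy] ->.
  rewrite inE; apply/existsP; exists x; apply/existsP; exists y; rewrite eqxx andbT.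
  case: (X_inv hx) (X_inv hy); case: x {hx} => s i; case: y {hy} => t j /= [-> hi] [-> hj].
  by rewrite /E /= hi hj.
apply/negP => /forallP /(_ (false, o0)) /forallP /(_ (true, o0)) hc.
have cl : closed (del_edges E F) [pred x : V | ~~ x.1].
  move=> [s i] [t j]; rewrite /del_edges /E /= => /andP [h hF].
  case: eqP h => [-> //|ne /andP [hi hj]].
  exfalso; move/negP: hF; apply.
  case: s t ne => [] [] // _.
    apply/imsetP; exists ((false, j), (true, i)); first by rewrite inE /= !inX.
    by rewrite /= setUC.
  apply/imsetP; exists ((false, i), (true, j)); first by rewrite inE /= !inX.
  by [].
by move: (closed_connect cl hc).
Qed.

Lemma edge_conn_le : edge_conn E <= 9.
Proof.
rewrite /edge_conn -big_filter.
have : F \in [seq x <- index_enum {set {set V}} | disconnecting E x].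
  by rewrite mem_filter F_disc mem_index_enum.
elim: [seq _ <- _ | _] => // a r IH; rewrite big_cons inE => /orP [/eqP <-|hr].
  exact: leq_trans (geq_minl _ _) F_card.
exact: leq_trans (geq_minr _ _) (IH hr).
Qed.

Lemma E_ore : locally_ore E.
Proof.
move=> v u w hu hw uw nuw.
wlog hs : u w hu hw uw nuw / u.1 = v.1.
  move=> H.
  have ne : u.1 != w.1.
    case: u w uw nuw {hu hw H} => [su a] [sw b] uw nuw.
    apply/negP => /eqP /= e1; move: nuw uw; rewrite /E /= e1 eqxx /= negbK => /eqP ->.
    by rewrite eqxx.
  have [e1|e1] := eqVneq u.1 v.1; first exact: H.
  rewrite addnC; apply: H => //; first by rewrite eq_sym.
    by rewrite E_sym.
  by case: (u.1) (w.1) (v.1) ne e1 => [] [] [].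
case: u w hu hw uw nuw hs => [s' a] [t b] hu hw uw nuw /= hs.
case: v hu hw hs => s i hu hw /= hs; subst s'.
rewrite !inE /E /= eqxx in hu hw.
have ts : t != s.
  apply/negP => /eqP ets; move: nuw uw; rewrite /E /= ets eqxx negbK => /eqP ->.
  by rewrite eqxx.
rewrite eq_sym (negbTE ts) in hw; case/andP: hw => hi hb.
move: nuw; rewrite /E /= eq_sym (negbTE ts) hb andbT -leqNgt => ha.
set Nv := nbhd E (s, i).
set A := [set x in Nv | E (s, a) x].
set B := [set x in Nv | E (t, b) x].
rewrite /deg /deg_in_nbhd -/Nv -/A -/B -cardsUI.
have cov : Nv \subset (A :|: B) :|: [set (s, a); (t, b)].
  apply/subsetP => [[r c]]; rewrite /Nv !inE /E /= => hx.
  have [er|er] := eqVneq r s.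
    subst r; rewrite eqxx in hx *.
    have [->|ca] := eqVneq c a; first by rewrite eqxx !orbT.
    by rewrite hx.
  rewrite eq_sym (negbTE er) in hx; case/andP: hx => _ hc.
  have -> : r = t by destruct r, s, t.
  rewrite eqxx.
  rewrite hi hc /=.
  have [->|cb] := eqVneq c b; first by rewrite eqxx !orbT.
  by case: (a < 3).
have two : exists c1 c2 : 'I_m, [/\ c1 < 3, c2 < 3, c1 != i, c2 != i & c1 != c2].
  have h0 : nat_of_ord (inord 0 : 'I_m) = 0 by rewrite inordK.
  have h1 : nat_of_ord (inord 1 : 'I_m) = 1 by rewrite inordK.
  have h2 : nat_of_ord (inord 2 : 'I_m) = 2 by rewrite inordK.
  have [i0|i0] := eqVneq (val i) 0.
    exists (inord 1), (inord 2); by rewrite -!val_eqE /= h1 h2 i0.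
  have [i1|i1] := eqVneq (val i) 1.
    exists (inord 0), (inord 2); by rewrite -!val_eqE /= h0 h2 i1.
  exists (inord 0), (inord 1); rewrite -!val_eqE /= h0 h1 eq_sym i0 eq_sym.
  by rewrite i1.
case: two => c1 [c2 [h1 h2 n1 n2 n12]].
have AB : [set (s, c1); (s, c2)] \subset A :&: B.
  have key (c : 'I_m) : c < 3 -> c != i ->
      [&& E (s,i) (s,c) && E (s,a) (s,c), E (s,i) (s,c) & E (t,b) (s,c)].
    move=> hc hci; rewrite /E /= eqxx (negbTE ts) hb hc (eq_sym i) hci /= andbT.
    apply/eqP => e; move: ha; rewrite e; lia.
  apply/subsetP => x; rewrite !inE => /orP [] /eqP ->; exact: key.
have c2' : #|[set (s, c1); (s, c2)]| = 2.
  by rewrite cards2; case: eqP => // [[]] e; move: n12; rewrite e eqxx.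
have := subset_leq_card cov; have := subset_leq_card AB.
rewrite c2' => hAB hN.
apply: leq_trans hN _.
apply: leq_trans (leq_card_setU _ _) _.
rewrite leq_add2l; apply: leq_trans hAB; rewrite cards2; by case: (_ != _).
Qed.

End G.

Theorem mainTheorem11 :
  forall N : nat, exists (T : finType) (e : rel T),
    [/\ N < #|T|, simple_graph e, connected_graph e, locally_ore e
      & edge_conn e != min_deg e].
Proof.
move=> N; exists (V N), (@E N); split.
- by rewrite card_prod card_bool card_ord; lia.
- by split; [exact: E_sym | exact: E_irr].
- exact: E_conn.
- exact: E_ore.
- apply/negP => /eqP h; have := edge_conn_le N; have := min_deg_ge N.
  move=> ha hb; rewrite h in hb; by have := leq_trans ha hb.
Qed.
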